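(* Let $G$ be a simple graph with at least one edge, with edge set $E$ and any orientation of its edges. Then $\mathcal{H}(G)$ is reducible if and only if there is a partition $E=E_1\cup E_2$ (into two nonempty disjoint sets) such that for every pair of edges $e_1\in E_1$ and $e_2\in E_2$, either $e_1$ and $e_2$ are two edges of a common triangle of $G$, or $e_1$ and $e_2$ share no vertex.
   Context: For an oriented edge $e$ write $e^-$ for its tail and $e^+$ for its head. For distinct edges $e,e'$: $e\leftrightarrow e'$ means $e^+=e'^-$ or $e'^+=e^-$; $e\overset{\pm}{\sim}e'$ means $e^+=e'^+$ or $e^-=e'^-$; $e\vartriangle e'$ means $e,e'$ are two edges of a common triangle of $G$. $\triangle(e)$ is the number of triangles containing $e$. The Helmholtzian matrix $\mathcal{H}(G)=(h_{ee'})$ is indexed by edges, with $h_{ee}=\triangle(e)+2$, and for $e\ne e'$: $h_{ee'}=-1$ if $e\leftrightarrow e'$ and not $e\vartriangle e'$; $h_{ee'}=1$ if $e\overset{\pm}{\sim}e'$ and not $e\vartriangle e'$; $h_{ee'}=0$ otherwise. A symmetric square matrix $M$ is reducible if there is a permutation matrix $P$ with $P^{-1}MP=\begin{pmatrix}E&O\\O&F\end{pmatrix}$ for square (nonempty) blocks $E,F$; otherwise it is irreducible. *)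

(* Defs.v *)
From mathcomp Require Import all_boot all_order all_algebra all_fingroup.
Set Implicit Arguments. Unset Strict Implicit. Unset Printing Implicit Defensive.
Import GRing.Theory Num.Theory.
Local Open Scope ring_scope.

(* An oriented simple graph on a finite vertex type V is given by its set D
   of oriented edges (e.1 = tail e^-, e.2 = head e^+). *)
Definition oriented_simple (V : finType) (D : {set V * V}) : Prop :=
  (forall e, e \in D -> e.1 != e.2) /\
  (forall u v, (u, v) \in D -> (v, u) \notin D).

Definition adj (V : finType) (D : {set V * V}) (u v : V) : bool :=
  ((u, v) \in D) || ((v, u) \in D).

Definition ends (V : finType) (e : V * V) : {set V} := [set e.1; e.2].

Definition ntri (V : finType) (D : {set V * V}) (e : V * V) : nat :=
  #|[set w | adj D e.1 w && adj D e.2 w]|.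

Definition cotri (V : finType) (D : {set V * V}) (e e' : V * V) : bool :=
  (e != e') &&
  [exists x : V, exists y : V, exists z : V,
     [&& adj D x y, adj D y z, adj D x z,
         ends e == [set x; y] & ends e' == [set y; z]]].

Definition consec (V : finType) (e e' : V * V) : bool :=
  (e.2 == e'.1) || (e'.2 == e.1).

Definition samedir (V : finType) (e e' : V * V) : bool :=
  (e.2 == e'.2) || (e.1 == e'.1).

Definition helm_entry (V : finType) (D : {set V * V}) (e e' : V * V) : int :=
  if e == e' then (ntri D e)%:Z + 2
  else if consec e e' && ~~ cotri D e e' then -1
  else if samedir e e' && ~~ cotri D e e' then 1
  else 0.

Definition Helmholtzian (V : finType) (D : {set V * V}) : 'M[int]_#|D| :=
  \matrix_(i < #|D|, j < #|D|) helm_entry D (enum_val i) (enum_val j).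

Definition reducible (R : comUnitRingType) (n : nat) (M : 'M[R]_n) : Prop :=
  exists n1 n2 (h : n1 + n2 = n), (0 < n1)%N /\ (0 < n2)%N /\
  exists (s : 'S_n) (E : 'M[R]_n1) (F : 'M[R]_n2),
    invmx (perm_mx s) *m M *m perm_mx s = castmx (h, h) (block_mx E 0 0 F).

(* Main.v *)
Require Import Defs.
From mathcomp Require Import all_boot all_order all_algebra all_fingroup.
Import GRing.Theory.
Local Open Scope ring_scope.

Lemma ends_disj (V : finType) (e e' : V * V) :
  [disjoint ends e & ends e'] = ~~ (consec e e' || samedir e e').
Proof.
rewrite /ends /consec /samedir.
rewrite disjoints_subset; apply/subsetP/idP.
- move=> H; apply/negP => /orP[/orP[]|/orP[]] /eqP E.
  + by move: (H e.2); rewrite !inE E eqxx ?orbT; move/(_ isT).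
  + by move: (H e.1); rewrite !inE -E eqxx ?orbT; move/(_ isT).
  + by move: (H e.2); rewrite !inE E eqxx ?orbT; move/(_ isT).
  + by move: (H e.1); rewrite !inE E eqxx ?orbT; move/(_ isT).
- move=> H x; rewrite !inE => /orP[]/eqP->; apply/negP => /orP[]/eqP E; move: H;
  by rewrite ?E eqxx ?orbT.
Qed.

Lemma adjC {V : finType} (D : {set V * V}) u v : adj D u v = adj D v u.
Proof. by rewrite /adj orbC. Qed.

Lemma cotri_sym (V : finType) (D : {set V * V}) e e' :
  cotri D e e' = cotri D e' e.
Proof.
rewrite /cotri eq_sym; congr (_ && _).
apply/existsP/existsP => -[x /existsP[y /existsP[z /and5P[a b c d f]]]];
  exists z; apply/existsP; exists y; apply/existsP; exists x;
  rewrite (adjC D z y) (adjC D y x) (adjC D z x) a b c /=;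
  by rewrite [[set z; y]]setUC [[set y; x]]setUC f d.
Qed.

Lemma helm0 (V : finType) (D : {set V * V}) e e' : e != e' ->
  (helm_entry D e e' == 0) = cotri D e e' || [disjoint ends e & ends e'].
Proof.
move=> ne; rewrite ends_disj /helm_entry (negbTE ne).
by case: (consec e e'); case: (samedir e e'); case: (cotri D e e').
Qed.

Lemma invperm (R : comUnitRingType) n (s : 'S_n) :
  invmx (perm_mx s) = perm_mx (s^-1)%g :> 'M[R]_n.
Proof.
rewrite -[RHS]mulmx1 -(mulmxV (unitmx_perm R s)) mulmxA -perm_mxM.
by rewrite mulVg perm_mx1 mul1mx.
Qed.

Lemma conjE (R : comUnitRingType) n (M : 'M[R]_n) (s : 'S_n) a b :
  (invmx (perm_mx s) *m M *m perm_mx s) a b = M ((s^-1)%g a) ((s^-1)%g b).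
Proof.
by rewrite invperm -row_permE -[s in perm_mx s]invgK -col_permE !mxE.
Qed.

From mathcomp Require Import zify.

Lemma red_iff (R : comUnitRingType) n (M : 'M[R]_n) :
  reducible M <-> exists n1 n2 (h : (n1 + n2 = n)%N), (0 < n1)%N /\ (0 < n2)%N /\
    exists t : 'S_n, forall a b : 'I_n, (a < n1 <= b)%N ->
      M (t a) (t b) = 0 /\ M (t b) (t a) = 0.
Proof.
split.
- move=> [n1 [n2 [h [p1 [p2 [s [E [F HE]]]]]]]].
  exists n1, n2, h; split => //; split => //; exists (s^-1)%g.
  have key a b : M ((s^-1)%g a) ((s^-1)%g b) = castmx (h,h) (block_mx E 0 0 F) a b.
    by rewrite -HE conjE.
  move=> a b /andP[ha hb].
  have hb' : (b - n1 < n2)%N by have := ltn_ord b; lia.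
  have ea : cast_ord (esym h) a = lshift n2 (Ordinal ha) by apply: val_inj.
  have eb : cast_ord (esym h) b = rshift n1 (Ordinal hb').
    by apply: val_inj => /=; lia.
  rewrite !key !castmxE ea eb.
  by rewrite block_mxEur block_mxEdl !mxE.
- move=> [n1 [n2 [h [p1 [p2 [t H]]]]]].
  exists n1, n2, h; split => //; split => //; exists (t^-1)%g.
  set N := (invmx _ *m _ *m _).
  exists (ulsubmx (castmx (esym h, esym h) N)), (drsubmx (castmx (esym h, esym h) N)).
  rewrite -[N in LHS](castmxKV h h); congr castmx.
  rewrite -[LHS]submxK; congr block_mx; apply/matrixP => i j;
    rewrite !mxE castmxE /N conjE invgK.
  + by apply: (proj1 (H _ _ _)); rewrite /= ltn_ord leq_addr.
  + by apply: (proj2 (H _ _ _)); rewrite /= ltn_ord leq_addr.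
Qed.

Theorem proposition3p1 (V : finType) (D : {set V * V}) :
  oriented_simple D -> D != set0 ->
  reducible (Helmholtzian D) <->
  exists E1 : {set V * V},
    [/\ E1 \subset D, E1 != set0, D :\: E1 != set0 &
      forall e1 e2, e1 \in E1 -> e2 \in D :\: E1 ->
        cotri D e1 e2 || [disjoint ends e1 & ends e2]].
Proof.
move=> _ _; rewrite red_iff; split.
- move=> [n1 [n2 [h [p1 [p2 [t H]]]]]].
  have hn0 : (0 < #|D|)%N by rewrite -h; lia.
  have hn1 : (n1 < #|D|)%N by rewrite -h; lia.
  pose a0 : 'I_#|D| := Ordinal hn0.
  pose b0 : 'I_#|D| := Ordinal hn1.
  exists [set enum_val (t a) | a in [pred a : 'I_#|D| | (a < n1)%N]]; split.
  + by apply/subsetP => _ /imsetP[a _ ->]; exact: enum_valP.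
  + by apply/set0Pn; exists (enum_val (t a0)); apply/imsetP; exists a0.
  + apply/set0Pn; exists (enum_val (t b0)); rewrite inE enum_valP andbT.
    apply/imsetP => -[a ha /enum_val_inj/perm_inj E].
    by move: ha; rewrite inE -E /= ltnn.
  + move=> e1 e2 /imsetP[a ha ->] /setDP[e2D nin].
    pose k := enum_rank_in e2D e2.
    have ek : enum_val k = e2 by rewrite /k enum_rankK_in.
    have hb : (n1 <= (t^-1)%g k)%N.
      rewrite leqNgt; apply/negP => hlt; apply/negP: nin; apply/negPn.
      by apply/imsetP; exists ((t^-1)%g k); rewrite ?inE // permKV ek.
    have ne : enum_val (t a) != e2.
      apply/eqP => E; apply/negP: nin; apply/negPn; rewrite -E.
      by apply/imsetP; exists a.
    rewrite -helm0 //; apply/eqP.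
    have := (H a ((t^-1)%g k) _).1; rewrite mxE permKV ek; apply.
    by move: ha; rewrite inE /= => ->.
- move=> [E1 [sub ne1 ne2 cond]].
  pose A : {set 'I_#|D|} := [set i | enum_val i \in E1].
  have h : (#|A| + #|~: A| = #|D|)%N by rewrite cardsC card_ord.
  exists #|A|, #|~: A|, h.
  have p1 : (0 < #|A|)%N.
    move/set0Pn: ne1 => [e He]; have eD := subsetP sub e He.
    apply/card_gt0P; exists (enum_rank_in eD e); by rewrite inE enum_rankK_in.
  have p2 : (0 < #|~: A|)%N.
    move/set0Pn: ne2 => [e /setDP[eD He]].
    apply/card_gt0P; exists (enum_rank_in eD e); by rewrite !inE enum_rankK_in.
  split => //; split => //.
  pose s0 := enum A ++ enum (~: A).
  have ss0 : size s0 = #|D| by rewrite size_cat -!cardE.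
  have us0 : uniq s0.
    rewrite cat_uniq !enum_uniq andbT /=; apply/hasPn => x.
    by rewrite !mem_enum !inE.
  pose g (i : 'I_#|D|) := nth i s0 i.
  have g_inj : injective g.
    move=> i j; rewrite /g (set_nth_default i j) ?ss0 // => /eqP.
    by rewrite nth_uniq ?ss0 // => /eqP/val_inj.
  exists (perm g_inj) => a b /andP[ha hb]; rewrite !permE.
  have gaA : g a \in A.
    by rewrite /g /s0 nth_cat -cardE ha -mem_enum mem_nth // -cardE.
  have gbA : g b \notin A.
    rewrite /g /s0 nth_cat -cardE ltnNge hb /=.
    have : nth b (enum (~: A)) (b - #|A|) \in enum (~: A).
      by apply: mem_nth; rewrite -cardE ltn_subLR // h.
    by rewrite mem_enum inE.
  have e1E : enum_val (g a) \in E1 by move: gaA; rewrite inE.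
  have e2E : enum_val (g b) \in D :\: E1.
    by move: gbA; rewrite !inE enum_valP andbT.
  have ne : enum_val (g a) != enum_val (g b).
    by apply/eqP => E; move: e2E; rewrite -E inE e1E.
  rewrite !mxE; split; apply/eqP.
  + by rewrite helm0 // cond.
  + by rewrite helm0 1?eq_sym // cotri_sym disjoint_sym cond.
Qed.
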